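(* With $G$ as defined below, $G$ is steep at the relative boundary of $\mathcal{P}_{\rm s}$: for any $p_0\in\partial\mathcal{P}_{\rm s}$, any $p_1\in\mathcal{P}_{\rm s}$, and $p_t=(1-t)p_0+tp_1$, one has \[ \lim_{t\to+0}\frac{d}{dt}G(p_t)=-\infty , \] where for $t\in(0,1)$, $\frac{d}{dt}G(p_t)=\sum_{(x,y)\in\mathcal{E}}(p_1(x,y)-p_0(x,y))\log\frac{p_t(y|x)}{v_0(y|x)}$. In particular there exists $(x,y)\in\mathcal{E}$ with $p_0(x,y)=0$ and $p_t(y|x)\to0$ as $t\to+0$.
   Context: $\mathcal{X}$ is a finite set and $\mathcal{E}\subset\mathcal{X}^2$ is such that the directed graph $(\mathcal{X},\mathcal{E})$ is strongly connected (for every $(x,y)$ there is a directed path from $x$ to $y$). $\mathcal{W}(\mathcal{X},\mathcal{E})$ is the set of Markov kernels $w(y|x)$ on $\mathcal{X}$ ($w\ge0$, $\sum_y w(y|x)=1$) with $\{(x,y)\mid w(y|x)>0\}=\mathcal{E}$; fix $v_0\in\mathcal{W}(\mathcal{X},\mathcal{E})$. $\mathcal{P}_{\rm s}$ is the set of probability distributions $p$ on $\mathcal{X}^2$ that are stationary, i.e. $\sum_y p(x,y)=\sum_y p(y,x)$ for all $x$, and whose support equals $\mathcal{E}$; $\mathrm{cl}(\mathcal{P}_{\rm s})$ is its closure in $\mathbb{R}^{\mathcal{X}^2}$ (stationary distributions with support contained in $\mathcal{E}$) and $\partial\mathcal{P}_{\rm s}=\mathrm{cl}(\mathcal{P}_{\rm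 s})\setminus\mathcal{P}_{\rm s}$ (those whose support is a proper subset of $\mathcal{E}$). For $p\in\mathrm{cl}(\mathcal{P}_{\rm s})$, $\bar p(x)=\sum_y p(x,y)$, $p(y|x)=p(x,y)/\bar p(x)$ when $\bar p(x)>0$, and $G(p)=\sum_{(x,y)\in\mathcal{E}}p(x,y)\log\frac{p(x,y)}{v_0(y|x)}-\sum_{x}\bar p(x)\log\bar p(x)$ with $0\log0=0$. *)

(* Defs.v *)
From HB Require Import structures.
From mathcomp Require Import all_boot all_order all_algebra.
From mathcomp Require Import all_classical all_reals all_analysis.
Set Implicit Arguments. Unset Strict Implicit. Unset Printing Implicit Defensive.
Import Order.TTheory GRing.Theory Num.Theory.
Local Open Scope ring_scope.

(* Functions on X^2 are curried: p x y = p(x,y); a kernel w is stored as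
   w x y = w(y|x).  The edge set E is a finite set of pairs. *)

Section Defs.
Context {R : realType} {X : finType}.

Definition strongly_connected (E : {set X * X}) : Prop :=
  forall x y : X, connect [rel a b | (a, b) \in E] x y.

Definition markov_kernel_on (E : {set X * X}) (w : X -> X -> R) : Prop :=
  [/\ forall x y, 0 <= w x y,
      forall x, \sum_(y : X) w x y = 1
    & forall x y, (0 < w x y) = ((x, y) \in E)].

Definition is_prob2 (p : X -> X -> R) : Prop :=
  (forall x y, 0 <= p x y) /\ \sum_(x : X) \sum_(y : X) p x y = 1.

Definition stationary (p : X -> X -> R) : Prop :=
  forall x, \sum_(y : X) p x y = \sum_(y : X) p y x.

Definition in_Ps (E : {set X * X}) (p : X -> X -> R) : Prop :=
  [/\ is_prob2 p, stationary p & forall x y, (p x y != 0) = ((x, y) \in E)].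

Definition in_clPs (E : {set X * X}) (p : X -> X -> R) : Prop :=
  [/\ is_prob2 p, stationary p & forall x y, p x y != 0 -> (x, y) \in E].

Definition in_bdPs (E : {set X * X}) (p : X -> X -> R) : Prop :=
  in_clPs E p /\ ~ in_Ps E p.

Definition pbar (p : X -> X -> R) (x : X) : R := \sum_(y : X) p x y.

Definition pcond (p : X -> X -> R) (x y : X) : R := p x y / pbar p x.

Definition xlnx_ (a b : R) : R := if a == 0 then 0 else a * ln (a / b).

Definition Gfun (E : {set X * X}) (v0 : X -> X -> R) (p : X -> X -> R) : R :=
  \sum_(e in E) xlnx_ (p e.1 e.2) (v0 e.1 e.2)
  - \sum_(x : X) xlnx_ (pbar p x) 1.

Definition segment (p0 p1 : X -> X -> R) (t : R) : X -> X -> R :=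
  fun x y => (1 - t) * p0 x y + t * p1 x y.

End Defs.

(* Main.v *)
Require Import Defs.
From HB Require Import structures.
From mathcomp Require Import all_boot all_order all_algebra.
From mathcomp Require Import all_classical all_reals all_analysis.
From mathcomp Require Import ring lra.
Import Order.TTheory GRing.Theory Num.Theory.
Import numFieldNormedType.Exports.
Local Open Scope ring_scope.
Local Open Scope classical_set_scope.

Lemma is_derive_affine {R : realType} (a b t : R) :
  is_derive t 1 (fun s : R => a + b * s) b.
Proof.
have H := (is_deriveD (is_derive_cst a t 1) (is_deriveZ b (is_derive_id t 1))).
have -> : (fun s : R => a + b * s) = (cst a + b \*: id) by apply/funext => s.
by apply: is_derive_eq H _; rewrite add0r /GRing.scale/= mulr1.
Qed.
Lemma is_derive_xlnx {R : realType} (a b c t : R) : 0 < c -> 0 < a + b * t ->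
  is_derive t 1 (fun s : R => xlnx_ (a + b * s) c)
    (b * (ln ((a + b * t) / c) + 1)).
Proof.
move=> c0 ut.
pose u := fun s : R => a + b * s.
have hu : is_derive t 1 u b by exact: is_derive_affine.
have cu : {for t, continuous u}.
  by apply: differentiable_continuous; apply/derivable1_diffP; apply: ex_derive.
have near_pos : \forall s \near t, 0 < u s.
  exact: (cvgr_gt _ cu _ ut).
pose w := fun s : R => a / c + b / c * s.
have hw : is_derive t 1 w (b / c) by exact: is_derive_affine.
have weq : forall s, w s = u s / c by move=> s; rewrite /w /u mulrDl mulrAC.
have hl : is_derive (w t) 1 (@ln R) (w t)^-1.
  apply: is_derive1_ln; rewrite weq divr_gt0 //.
have hlw := is_derive1_comp hl hw.
have hg := is_deriveM hu hlw.
have -> : (fun s : R => xlnx_ (a + b * s) c) =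
  (fun s => xlnx_ (u s) c) by [].
apply: near_eq_is_derive (is_derive_eq hg _).
  near=> s.
  rewrite /xlnx_ gt_eqF; last by near: s.
  by change (u s * ln (w s) = u s * ln (u s / c)); rewrite weq.
change (u t * ((w t)^-1 * (b / c)) + ln (w t) * b =
  b * (ln ((a + b * t) / c) + 1)).
rewrite weq.
have ut0 : u t != 0 by rewrite gt_eqF.
have c00 : c != 0 by rewrite gt_eqF.
rewrite /u in ut0 *.
field.
by rewrite ut0 c00.
Unshelve. all: by end_near.
Qed.

Lemma is_derive_bigsum {R : realType} (I : finType) (P : pred I)
  (h : I -> R -> R) (dh : I -> R) (t : R) :
  (forall i, P i -> is_derive t 1 (h i) (dh i)) ->
  is_derive t 1 (fun s => \sum_(i | P i) h i s) (\sum_(i | P i) dh i).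
Proof.
move=> H; rewrite -fct_sumE.
apply: (big_ind2 (fun f d => is_derive t 1 f d)) => //.
- exact: is_derive_cst.
- by move=> f1 d1 f2 d2 h1 h2; apply: is_deriveD.
Qed.

Lemma le_sum_term {R : realType} (I : finType) (f : I -> R) i :
  (forall j, 0 <= f j) -> f i <= \sum_j f j.
Proof. by move=> f0; rewrite (bigD1 i) //= lerDl sumr_ge0. Qed.

Lemma bound_lemma {R : realType} (d L lo hi : R) :
  L <= hi -> (0 <= d \/ lo <= L) -> d * L <= `|d| * (`|lo| + `|hi|).
Proof.
move=> Lhi [d0|loL].
  apply: (le_trans (ler_wpM2l d0 Lhi)).
  rewrite ger0_norm //; apply: ler_wpM2l => //.
  apply: (le_trans (ler_norm hi)); by rewrite lerDr normr_ge0.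
apply: (le_trans (ler_norm _)); rewrite normrM; apply: ler_wpM2l => //.
rewrite ler_norml; have := ler_norm hi; have := ler_norm (- lo).
rewrite normrN; have := normr_ge0 lo; have := normr_ge0 hi.
move=> *; apply/andP; split; lra.
Qed.

Theorem mainTheorem6 (R : realType) (X : finType) (E : {set X * X})
  (v0 : X -> X -> R) (p0 p1 : X -> X -> R) :
  strongly_connected E ->
  markov_kernel_on E v0 ->
  in_bdPs E p0 ->
  in_Ps E p1 ->
  (* for t in (0,1), t |-> G(p_t) is differentiable with the stated derivative *)
  (forall t : R, 0 < t < 1 ->
     derivable (fun s : R => Gfun E v0 (segment p0 p1 s)) t 1 /\
     (fun s : R => Gfun E v0 (segment p0 p1 s))^`() t =
       \sum_(e in E) (p1 e.1 e.2 - p0 e.1 e.2) *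
           ln (pcond (segment p0 p1 t) e.1 e.2 / v0 e.1 e.2)) /\
  (* steepness: d/dt G(p_t) -> -oo as t -> +0 *)
  ((fun s : R => Gfun E v0 (segment p0 p1 s))^`() t @[t --> 0^'+] --> -oo) /\
  (* some edge with p0(x,y) = 0 and p_t(y|x) -> 0 *)
  (exists2 e, e \in E &
     p0 e.1 e.2 = 0 /\ pcond (segment p0 p1 t) e.1 e.2 @[t --> 0^'+] --> 0).
Proof.
move=> hsc [v0ge v0sum v0pos] [[[p0ge p0sum] p0st p0supp] p0nPs].
move=> [[p1ge p1sum] p1st p1supp].
have p1pos : forall x y, (x, y) \in E -> 0 < p1 x y.
  by move=> x y xyE; rewrite lt0r p1supp xyE p1ge.
have v0p : forall x y, (x, y) \in E -> 0 < v0 x y by move=> x y; rewrite v0pos.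
have p0out : forall x y, (x, y) \notin E -> p0 x y = 0.
  by move=> x y xyE; apply/eqP; apply: contraNT xyE; exact: p0supp.
have p1out : forall x y, (x, y) \notin E -> p1 x y = 0.
  by move=> x y xyE; apply/eqP; rewrite -[_ == 0]negbK p1supp.
have out : forall x, exists y, (x, y) \in E.
  have [[a b] /= ab] : exists e : X * X, e \in E.
    case: (pickP [pred e : X * X | p1 e.1 e.2 != 0]).
      by move=> [a b] /= ab; exists (a, b); rewrite -p1supp.
    move=> H; exfalso.
    have : \sum_i \sum_j p1 i j = 0.
      apply: big1 => i _; apply: big1 => j _.
      by apply/eqP; move: (H (i, j)) => /= /negbFE.
    by rewrite p1sum => /eqP; rewrite oner_eq0.
  move=> x; have /connectP [pth pP la] := hsc x a.
  case: pth pP la => [|c pth] /=.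
    by move=> _ la; exists b; rewrite -la.
  by move=> /andP[xc _] _; exists c.
have segE : forall s x y, segment p0 p1 s x y = p0 x y + (p1 x y - p0 x y) * s.
  by move=> s x y; rewrite /segment; ring.
have pbarE : forall s x,
    pbar (segment p0 p1 s) x = pbar p0 x + (pbar p1 x - pbar p0 x) * s.
  by move=> s x; rewrite /pbar /segment big_split /= -!mulr_sumr; ring.
have seg_pos : forall s, 0 < s <= 1 -> forall x y, (x, y) \in E ->
    0 < segment p0 p1 s x y.
  move=> s /andP[s0 s1] x y xy; rewrite /segment.
  apply: ltr_wpDl; first by apply: mulr_ge0 => //; rewrite subr_ge0.
  by apply: mulr_gt0 => //; exact: p1pos.
have seg_ge0 : forall s, 0 <= s <= 1 -> forall x y, 0 <= segment p0 p1 s x y.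
  move=> s /andP[s0 s1] x y; rewrite /segment.
  by apply: addr_ge0; apply: mulr_ge0 => //; rewrite subr_ge0.
have pbar_pos : forall s, 0 < s <= 1 -> forall x, 0 < pbar (segment p0 p1 s) x.
  move=> s hs x; have [y xy] := out x.
  apply: (lt_le_trans (seg_pos s hs x y xy)); apply: le_sum_term => j.
  by apply: seg_ge0; case/andP: hs => /ltW -> ->.
have pbar_le1 : forall s, 0 <= s <= 1 -> forall x, pbar (segment p0 p1 s) x <= 1.
  move=> s hs x.
  apply: (@le_trans _ _ (\sum_i pbar (segment p0 p1 s) i)).
    by apply: le_sum_term => j; apply: sumr_ge0 => k _; apply: seg_ge0.
  under eq_bigr do rewrite pbarE.
  rewrite big_split /= -mulr_suml sumrB.
  have -> : \sum_i pbar p0 i = 1 by [].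
  have -> : \sum_i pbar p1 i = 1 by [].
  by rewrite subrr mul0r addr0.
have pcond_le1 : forall s, 0 < s <= 1 -> forall x y,
    pcond (segment p0 p1 s) x y <= 1.
  move=> s hs x y; rewrite /pcond ler_pdivrMr ?pbar_pos // mul1r.
  apply: le_sum_term => j; apply: seg_ge0.
  by case/andP: hs => /ltW -> ->.
have pcond_pos : forall s, 0 < s <= 1 -> forall x y, (x, y) \in E ->
    0 < pcond (segment p0 p1 s) x y.
  by move=> s hs x y xy; rewrite /pcond divr_gt0 ?seg_pos ?pbar_pos.
have part1 : forall t : R, 0 < t < 1 ->
     derivable (fun s : R => Gfun E v0 (segment p0 p1 s)) t 1 /\
     (fun s : R => Gfun E v0 (segment p0 p1 s))^`() t =
       \sum_(e in E) (p1 e.1 e.2 - p0 e.1 e.2) *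
           ln (pcond (segment p0 p1 t) e.1 e.2 / v0 e.1 e.2).
  move=> t /andP[t0 t1].
  have ht : 0 < t <= 1 by rewrite t0 ltW.
  pose F1 := fun s : R => \sum_(e in E)
      xlnx_ (p0 e.1 e.2 + (p1 e.1 e.2 - p0 e.1 e.2) * s) (v0 e.1 e.2).
  pose F2 := fun s : R => \sum_(x : X)
      xlnx_ (pbar p0 x + (pbar p1 x - pbar p0 x) * s) 1.
  have GE : (fun s => Gfun E v0 (segment p0 p1 s)) = F1 - F2.
    apply/funext => s; rewrite /Gfun /F1 /F2 /=.
    congr (_ - _); apply: eq_bigr => ? _; by rewrite ?segE ?pbarE.
  have hd1 : is_derive t 1 F1 (\sum_(e in E) (p1 e.1 e.2 - p0 e.1 e.2) *
      (ln ((p0 e.1 e.2 + (p1 e.1 e.2 - p0 e.1 e.2) * t) / v0 e.1 e.2) + 1)).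
    apply: is_derive_bigsum => -[x y] xy /=; apply: is_derive_xlnx.
      exact: v0p.
    by rewrite -segE; apply: seg_pos.
  have hd2 : is_derive t 1 F2 (\sum_(x : X) (pbar p1 x - pbar p0 x) *
      (ln ((pbar p0 x + (pbar p1 x - pbar p0 x) * t) / 1) + 1)).
    apply: is_derive_bigsum => x _ /=; apply: is_derive_xlnx => //.
    by rewrite -pbarE; apply: pbar_pos.
  have hd := is_deriveB hd1 hd2.
  move: hd; rewrite -GE => hd.
  split; first by case: hd => hder _; exact hder.
  rewrite derive1E derive_val.
  set pt := segment p0 p1 t.
  have S2 : \sum_(x : X) (pbar p1 x - pbar p0 x) *
      (ln ((pbar p0 x + (pbar p1 x - pbar p0 x) * t) / 1) + 1)
     = \sum_(e in E) (p1 e.1 e.2 - p0 e.1 e.2) * (ln (pbar pt e.1) + 1).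
    under eq_bigr do rewrite divr1 -pbarE -/pt.
    transitivity (\sum_(e : X * X)
        (p1 e.1 e.2 - p0 e.1 e.2) * (ln (pbar pt e.1) + 1)).
      rewrite -(pair_bigA _ (fun x y => (p1 x y - p0 x y) * (ln (pbar pt x) + 1))).
      apply: eq_bigr => x _ /=.
      by rewrite {1 2}/pbar -sumrB mulr_suml.
    rewrite [RHS]big_mkcond /=; apply: eq_bigr => -[x y] _ /=.
    by case: ifP => // /negbT xy; rewrite p0out // p1out // subrr mul0r.
  rewrite S2 -sumrB; apply: eq_bigr => -[x y] xy /=.
  rewrite -segE -/pt.
  have ptp : 0 < pt x y := seg_pos t ht x y xy.
  have pbp : 0 < pbar pt x := pbar_pos t ht x.
  have vp := v0p x y xy.
  rewrite /pcond !ln_div ?posrE ?divr_gt0 //.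
  ring.
have [xs [ys [exy p0e B0p]]] : exists xs ys,
    [/\ (xs, ys) \in E, p0 xs ys = 0 & 0 < pbar p0 xs].
  case: (pickP [pred e : X * X |
      [&& e \in E, p0 e.1 e.2 == 0 & 0 < pbar p0 e.1]]).
    by move=> [x y] /= /and3P[? /eqP ? ?]; exists x, y.
  move=> H; exfalso; apply: p0nPs.
  have clos : forall x y, (x, y) \in E -> 0 < pbar p0 x -> 0 < pbar p0 y.
    move=> x y xy px; have := H (x, y); rewrite /= xy px andbT /= => /negbT h.
    have pxy : 0 < p0 x y by rewrite lt0r h p0ge.
    rewrite /pbar p0st; apply: (lt_le_trans pxy).
    by apply: (@le_sum_term R X (fun z => p0 z y) x) => z.
  have [x0 px0] : exists x0, 0 < pbar p0 x0.
    case: (pickP [pred x | 0 < pbar p0 x]).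
      by move=> x /= px; exists x.
    move=> H'; exfalso.
    have : \sum_i pbar p0 i = 0.
      apply: big1 => i _; apply/eqP; rewrite eq_le.
      rewrite (sumr_ge0 _ (fun j _ => p0ge i j)) andbT.
      by rewrite leNgt; move: (H' i) => /= ->.
    by rewrite p0sum => /eqP; rewrite oner_eq0.
  have allS : forall x, 0 < pbar p0 x.
    move=> x; have /connectP [pth pP ->] := hsc x0 x.
    elim: pth x0 px0 pP => [|z pth IH] w pw //= /andP[wz pP].
    by apply: IH pP; exact: clos wz pw.
  split; [by split | by [] | ].
  move=> x y; apply/idP/idP; first exact: p0supp.
  by move=> xy; have := H (x, y); rewrite /= xy allS andbT => /negbT.
have B0 := B0p.
have P1p : 0 < p1 xs ys := p1pos xs ys exy.
have v0s : 0 < v0 xs ys := v0p xs ys exy.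
have pcondE : forall t, 0 < t <= 1 -> pcond (segment p0 p1 t) xs ys =
    t * p1 xs ys / pbar (segment p0 p1 t) xs.
  by move=> t _; rewrite /pcond /segment p0e mulr0 add0r.
have pbar_lb : forall t, 0 <= t <= 1 / 2 -> pbar p0 xs / 2 <= pbar (segment p0 p1 t) xs.
  move=> t /andP[t0 t2]; rewrite pbarE.
  have : 0 <= pbar p1 xs by apply: sumr_ge0.
  move=> *; nra.
have ub : forall t, 0 < t <= 1 / 2 ->
    pcond (segment p0 p1 t) xs ys <= (2 * p1 xs ys / pbar p0 xs) * t.
  move=> t /andP[t0 t2].
  have ht : 0 < t <= 1 by rewrite t0 /=; lra.
  have pb := pbar_pos t ht xs.
  have lb := pbar_lb t ltac:(rewrite (ltW t0) t2 //).
  rewrite pcondE // ler_pdivrMr //.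
  have -> : t * p1 xs ys = 2 * p1 xs ys / pbar p0 xs * t * (pbar p0 xs / 2).
    by field; rewrite gt_eqF.
  apply: ler_wpM2l => //.
  by apply: mulr_ge0; [apply: divr_ge0; lra | lra].
split; first exact: part1.
split; last first.
  apply: (@ex_intro2 _ _ _ (xs, ys)); first by []. split => //=.
  apply/cvgrPdist_lt => eps eps0.
  have k0 : 0 < 2 * p1 xs ys / pbar p0 xs by apply: divr_gt0 => //; lra.
  near=> t.
  have t0 : 0 < t by near: t; exact: nbhs_right_gt.
  have t2 : t <= 1 / 2 by near: t; apply: nbhs_right_le; lra.
  have te : t < eps / (2 * p1 xs ys / pbar p0 xs).
    by near: t; apply: nbhs_right_lt; apply: divr_gt0.
  have ht : 0 < t <= 1 by rewrite t0 /=; lra.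
  rewrite sub0r normrN ger0_norm; last exact: ltW (pcond_pos t ht xs ys exy).
  apply: (le_lt_trans (ub t _)); first by rewrite t0.
  by rewrite mulrC -ltr_pdivlMr.
apply/cvgrNyPle => A.
pose K := \sum_(e in E | e != (xs, ys)) `|p1 e.1 e.2 - p0 e.1 e.2| *
    (`|ln (p0 e.1 e.2 / (2 * v0 e.1 e.2))| + `|ln (1 / v0 e.1 e.2)|).
pose c := 2 * p1 xs ys / pbar p0 xs / v0 xs ys.
have c0 : 0 < c.
  by apply: divr_gt0 => //; apply: divr_gt0 => //; lra.
pose M := (A - K) / p1 xs ys.
near=> t.
have t0 : 0 < t by near: t; exact: nbhs_right_gt.
have t2 : t <= 1 / 2 by near: t; apply: nbhs_right_le; lra.
have tM : t <= expR M / c.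
  by near: t; apply: nbhs_right_le; apply: divr_gt0 => //; exact: expR_gt0.
have ht : 0 < t <= 1 by rewrite t0 /=; lra.
have ht' : 0 < t < 1 by rewrite t0 /=; lra.
rewrite (part1 t ht').2 (bigD1 (xs, ys)) //=.
have lc : ln (pcond (segment p0 p1 t) xs ys / v0 xs ys) <= M.
  apply: (@le_trans _ _ (ln (c * t))).
    rewrite ler_ln ?posrE; last 2 first.
    - by apply: divr_gt0 => //; exact: pcond_pos.
    - exact: mulr_gt0.
    have -> : c * t = 2 * p1 xs ys / pbar p0 xs * t / v0 xs ys.
      by rewrite /c mulrAC.
    apply: ler_wpM2r; first by rewrite invr_ge0 ltW.
    by apply: ub; rewrite t0.
  have ct0 : 0 < c * t by exact: mulr_gt0.
  rewrite -[M]expRK ler_ln ?posrE ?expR_gt0 //.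
  by rewrite mulrC -ler_pdivlMr.
have h1 : p1 xs ys * ln (pcond (segment p0 p1 t) xs ys / v0 xs ys) <= A - K.
  have -> : A - K = p1 xs ys * M.
    by rewrite /M mulrCA divff ?mulr1 // gt_eqF.
  by rewrite ler_pM2l.
have h2 : \sum_(e in E | e != (xs, ys)) (p1 e.1 e.2 - p0 e.1 e.2) *
    ln (pcond (segment p0 p1 t) e.1 e.2 / v0 e.1 e.2) <= K.
  apply: ler_sum => -[x y] /andP[xy _] /=.
  have vp := v0p x y xy.
  have pc := pcond_pos t ht x y xy.
  have q1 : 0 < pcond (segment p0 p1 t) x y / v0 x y by exact: divr_gt0.
  have q2 : 0 < 1 / v0 x y by apply: divr_gt0.
  apply: bound_lemma.
    rewrite ler_ln ?posrE //.
    apply: ler_wpM2r; first by rewrite invr_ge0 ltW.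
    exact: pcond_le1.
  have [p00|p0p] := eqVneq (p0 x y) 0.
    by left; rewrite p00 subr0.
  right.
  have p0p' : 0 < p0 x y by rewrite lt0r p0p p0ge.
  have q3 : 0 < p0 x y / (2 * v0 x y).
    by apply: divr_gt0 => //; apply: mulr_gt0 => //; lra.
  rewrite ler_ln ?posrE //.
  have -> : p0 x y / (2 * v0 x y) = p0 x y / 2 / v0 x y.
    by rewrite invfM mulrA.
  apply: ler_wpM2r; first by rewrite invr_ge0 ltW.
  rewrite /pcond ler_pdivlMr ?pbar_pos //.
  have pb1 := pbar_le1 t ltac:(rewrite (ltW t0) /=; lra) x.
  have pb0 := pbar_pos t ht x.
  rewrite segE.
  have := p1ge x y.
  move=> *; nra.
rewrite p0e subr0.
lra.
Unshelve. all: by end_near.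
Qed.
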